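(* Let $(X,\mathscr{A},\mu)$ be a $\sigma$-finite measure space, $\phi$ a nonsingular transformation of $X$ with $0<\mathsf{h}_\phi<\infty$ a.e. $[\mu]$, and $P\colon X\times\mathfrak{B}(\mathbb{R}_+)\to[0,1]$ an $\mathscr{A}$-measurable family of probability measures satisfying (CC): $\mathsf{E}(P(\cdot,\sigma))(x)=\dfrac{\int_\sigma t\,P(\phi(x),\mathrm{d}t)}{\mathsf{h}_\phi(\phi(x))}$ for $\mu$-a.e. $x\in X$, for every $\sigma\in\mathfrak{B}(\mathbb{R}_+)$. Then for every $n\in\mathbb{Z}_+$, $\mathsf{h}_{\phi^n}(x)=\int_0^\infty t^n\,P(x,\mathrm{d}t)$ for $\mu$-a.e. $x\in X$. Moreover, if $C_\phi^n$ is densely defined for every $n\in\mathbb{Z}_+$, then for $\mu$-a.e. $x\in X$ the sequence $\{\mathsf{h}_{\phi^n}(x)\}_{n=0}^\infty$ is a Stieltjes moment sequence with representing measure $P(x,\cdot)$.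
   Context: $\mathbb{R}_+=[0,\infty)$, $\mathbb{Z}_+=\{0,1,2,\dots\}$. Conventions: $0\cdot\infty=0$, $1/0=\infty$, $0/0=1$. Nonsingular transformation: $\phi^{-1}(\Delta)\in\mathscr{A}$ for $\Delta\in\mathscr{A}$ and $\mu(\phi^{-1}(\Delta))=0$ when $\mu(\Delta)=0$. $\phi^n$ is the $n$-fold composition ($\phi^0=\mathrm{id}_X$), and $\mathsf{h}_{\phi^n}$ is the Radon–Nikodym derivative of $\Delta\mapsto\mu((\phi^n)^{-1}(\Delta))$ w.r.t. $\mu$. $C_\phi f=f\circ\phi$ on $\{f\in L^2(\mu):f\circ\phi\in L^2(\mu)\}$. $\mathsf{E}(f)$ is the conditional expectation of an $\mathscr{A}$-measurable $f\colon X\to[0,\infty]$ w.r.t. $\phi^{-1}(\mathscr{A})$: the a.e. unique $\phi^{-1}(\mathscr{A})$-measurable function with $\int(g\circ\phi)f\,\mathrm{d}\mu=\int(g\circ\phi)\mathsf{E}(f)\,\mathrm{d}\mu$ for every $\mathscr{A}$-measurable $g\ge0$. An $\mathscr{A}$-measurable family of probability measures: each $P(x,\cdot)$ a Borel probability measure on $\mathbb{R}_+$, each $P(\cdot,\sigma)$ $\mathscr{A}$-measurable. A sequence $\{a_n\}_{n\ge0}$ is a Stieltjes moment sequence with representing measure $\nu$ if $\nu$ is a Borel measure on $\mathbb{R}_+$ with $a_n=\int_0^\infty s^n\nu(\mathrm{d}s)$ for all $n$. *)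

(* Defs.v *)
From HB Require Import structures.
From mathcomp Require Import all_boot all_order all_algebra.
From mathcomp Require Import all_classical all_reals.
From mathcomp Require Import all_analysis measurable_realfun.

Set Implicit Arguments.
Unset Strict Implicit.
Unset Printing Implicit Defensive.

Import Order.TTheory GRing.Theory Num.Theory.
Local Open Scope classical_set_scope.
Local Open Scope ring_scope.
Local Open Scope ereal_scope.

Section Defs.
Context (R : realType) (d : measure_display) (T : measurableType d).
Implicit Types (mu : {measure set T -> \bar R}) (phi : T -> T).

Definition nonsingular mu phi :=
  measurable_fun setT phi /\
  forall A : set T, measurable A -> mu A = 0 -> mu (phi @^-1` A) = 0.

Definition RN_deriv_iter mu phi (n : nat) (h : T -> \bar R) :=
  measurable_fun setT h /\ (forall x, 0 <= h x) /\
  forall A : set T, measurable A ->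
    mu (iter n phi @^-1` A) = \int[mu]_(x in A) h x.

(* f is phi^{-1}(A)-measurable *)
Definition preim_measurable phi (f : T -> \bar R) :=
  forall B : set (\bar R), measurable B ->
    exists D : set T, measurable D /\ f @^-1` B = phi @^-1` D.

(* e is (a version of) the conditional expectation E(f) of f w.r.t.
   phi^{-1}(A) *)
Definition is_condexp mu phi (f e : T -> \bar R) :=
  preim_measurable phi e /\ (forall x, 0 <= e x) /\
  forall g : T -> \bar R, measurable_fun setT g -> (forall x, 0 <= g x) ->
    \int[mu]_x (g (phi x) * f x) = \int[mu]_x (g (phi x) * e x).

Definition L2 mu (f : T -> R) :=
  measurable_fun setT f /\ \int[mu]_x ((`|f x| ^+ 2)%R)%:E < +oo.

Definition dom_Cphi_pow mu phi (n : nat) (f : T -> R) :=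
  forall k, (k <= n)%N -> L2 mu (f \o iter k phi).

Definition Cphi_pow_densely_defined mu phi (n : nat) :=
  forall f, L2 mu f -> forall eps : R, (0 < eps)%R ->
    exists g, dom_Cphi_pow mu phi n g /\
      \int[mu]_x ((`|f x - g x| ^+ 2)%R)%:E < eps%:E.
End Defs.

(* division in [0,oo] with the conventions 1/0 = oo, 0/0 = 1 *)
Definition ediv0 (R : realType) (a b : \bar R) : \bar R :=
  if b == 0 then (if a == 0 then 1 else +oo) else a * b^-1.

(* {a_n} is a Stieltjes moment sequence (of reals) with representing
   measure nu, a Borel measure on R_+ (here: a measure on R, integrated
   over [0, oo)) *)
Definition Stieltjes_rep (R : realType) (a : nat -> \bar R)
    (nu : {measure set R -> \bar R}) :=
  (forall n, a n \is a fin_num) /\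
  forall n, a n = \int[nu]_(s in `[0%R, +oo[%classic) ((s ^+ n)%R)%:E.
Arguments ediv0 {R}.
Arguments Stieltjes_rep {R}.

(* Main.v *)
Require Import Defs.
From HB Require Import structures.
From mathcomp Require Import all_boot all_order all_algebra.
From mathcomp Require Import all_classical all_reals.
From mathcomp Require Import all_analysis measurable_realfun.

Import Order.TTheory GRing.Theory Num.Theory.
Local Open Scope classical_set_scope.
Local Open Scope ring_scope.
Local Open Scope ereal_scope.
Import HBNNSimple.

Lemma nd_cvg_mulel (R : realType) (c : \bar R) (u : (\bar R)^nat) :
  0 <= c -> (forall n, 0 <= u n) -> nondecreasing_seq u ->
  (fun n => c * u n) @ \oo --> c * limn u.
Proof.
move=> c0 u0 ndu.
have cu : u @ \oo --> limn u by apply: ereal_nondecreasing_is_cvgn.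
move: c c0 => [c| |] //= c0.
- exact: cvgeZl.
- have [l0|l0] := eqVneq (limn u) 0.
  + have uz n : u n = 0.
      apply/eqP; rewrite eq_le u0 andbT -l0.
      have -> : limn u = ereal_sup (range u).
        by apply/cvg_lim => //; exact: ereal_nondecreasing_cvgn.
      by apply: ereal_sup_ubound; exists n.
    rewrite l0 mule0; under eq_fun do rewrite uz mule0; exact: cvg_cst.
  + have -> : (fun n => +oo * u n) = (fun n => (cst +oo n) * u n) by [].
    apply: cvgeM => //; last exact: cvg_cst.
    move: l0; case: (limn u) => //.
Qed.

Section Psi.
Context (R : realType) (d : measure_display) (T : measurableType d)
  (d' : measure_display) (S : measurableType d')
  (mu : {measure set T -> \bar R}) (K : T -> {measure set S -> \bar R})
  (mK : forall U, measurable U -> measurable_fun setT (fun x => K x U))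
  (a : T -> \bar R) (a0 : forall x, 0 <= a x) (ma : measurable_fun setT a)
  (b : S -> R) (b0 : forall t, (0 <= b t)%R) (mb : measurable_fun setT b).

Definition Psi (f : S -> \bar R) :=
  \int[mu]_x (a x * \int[K x]_t ((b t)%:E * f t)).

Lemma mPsi_inner f : (forall t, 0 <= f t) -> measurable_fun setT f ->
  measurable_fun setT (fun x => \int[K x]_t ((b t)%:E * f t)).
Proof.
move=> f0 mf; apply: measurable_fun_integral_kernel => //.
- by move=> t; rewrite mule_ge0// lee_fin.
- by apply: emeasurable_funM => //; exact/measurable_EFinP.
Qed.

Lemma mPsi_integrand f : (forall t, 0 <= f t) -> measurable_fun setT f ->
  measurable_fun setT (fun x => a x * \int[K x]_t ((b t)%:E * f t)).
Proof. by move=> f0 mf; apply: emeasurable_funM => //; exact: mPsi_inner. Qed.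

Lemma Psi_integrand_ge0 f : (forall t, 0 <= f t) -> forall x,
  0 <= a x * \int[K x]_t ((b t)%:E * f t).
Proof.
by move=> f0 x; rewrite mule_ge0// integral_ge0// => t _; rewrite mule_ge0// lee_fin.
Qed.

Lemma Psi_mct f (f0 : forall t, 0 <= f t) (mf : measurable_fun setT f) :
  Psi f = limn (fun n => Psi (EFin \o nnsfun_approx measurableT mf n)).
Proof.
set f_ := nnsfun_approx measurableT mf.
have mfn n : measurable_fun setT (EFin \o f_ n) by exact/measurable_EFinP.
have fn0 n t : 0 <= (EFin \o f_ n) t by rewrite /= lee_fin.
have ndf t : nondecreasing_seq (fun n => (f_ n t)%:E).
  by move=> m n mn; rewrite lee_fin; exact/lefP/nd_nnsfun_approx.
have inner x : \int[K x]_t ((b t)%:E * f t) =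
    limn (fun n => \int[K x]_t ((b t)%:E * (EFin \o f_ n) t)).
  rewrite -monotone_convergence//.
  - apply: eq_integral => t _; apply/esym/cvg_lim => //.
    apply: cvgeZl => //; exact: cvg_nnsfun_approx.
  - move=> n; apply: emeasurable_funM => //; exact/measurable_EFinP.
  - by move=> n t _; rewrite mule_ge0// lee_fin.
  - by move=> t _ m n mn; rewrite lee_wpmul2l// ?lee_fin//; exact: ndf.
have ndI x : nondecreasing_seq (fun n => \int[K x]_t ((b t)%:E * (EFin \o f_ n) t)).
  move=> m n mn; apply: ge0_le_integral => //.
  - by move=> t _; rewrite mule_ge0// lee_fin.
  - apply: emeasurable_funM => //; exact/measurable_EFinP.
  - apply: emeasurable_funM => //; exact/measurable_EFinP.
  - by move=> t _; rewrite lee_wpmul2l// ?lee_fin//; exact: ndf.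
rewrite /Psi -monotone_convergence//.
- apply: eq_integral => x _; rewrite inner; apply/esym/cvg_lim => //.
  apply: nd_cvg_mulel => // n; apply: integral_ge0 => t _.
  by rewrite mule_ge0// lee_fin.
- by move=> n; apply: mPsi_integrand.
- by move=> n x _; apply: Psi_integrand_ge0.
- by move=> x _ m n mn; rewrite lee_wpmul2l//; exact: ndI.
Qed.

Lemma Psi_lin (g : {nnsfun S >-> R}) :
  Psi (EFin \o g) =
  \sum_(r \in range g) r%:E * Psi (EFin \o \1_(g @^-1` [set r])).
Proof.
have mI r : measurable (g @^-1` [set r]) by exact: measurable_sfunP.
have mri r : measurable_fun setT (EFin \o (fun t => r * \1_(g @^-1` [set r]) t)%R).
  apply/measurable_EFinP; apply: measurable_funM => //.
have ri0 r t : 0 <= (EFin \o (fun t => r * \1_(g @^-1` [set r]) t)%R) t.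
  by rewrite /= EFinM; exact: nnfun_muleindic_ge0.
transitivity (\int[mu]_x (a x * \int[K x]_t
   (\sum_(r \in range g) (b t)%:E * (EFin \o (fun t => r * \1_(g @^-1` [set r]) t)%R) t))).
  apply: eq_integral => x _; congr (_ * _); apply: eq_integral => t _.
  rewrite /= fimfunE -fsumEFin// ge0_mule_fsumr// => r.
  by rewrite EFinM; exact: nnfun_muleindic_ge0.
transitivity (\int[mu]_x (\sum_(r \in range g) a x * \int[K x]_t
   ((b t)%:E * (EFin \o (fun t => r * \1_(g @^-1` [set r]) t)%R) t))).
  apply: eq_integral => x _; rewrite ge0_integral_fsum//.
  - rewrite ge0_mule_fsumr// => r; apply: integral_ge0 => t _.
    by rewrite mule_ge0// lee_fin.
  - by move=> r; apply: emeasurable_funM => //; exact/measurable_EFinP.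
  - by move=> r t _; rewrite mule_ge0// lee_fin.
rewrite ge0_integral_fsum//; last 2 first.
  - by move=> r; exact: mPsi_integrand.
  - by move=> r x _; exact: Psi_integrand_ge0.
apply: eq_fsbigr => r /[!inE] -[t0 _ <-].
rewrite /Psi -ge0_integralZl//; last 2 first.
  - by move=> x _; apply: Psi_integrand_ge0 => t; rewrite lee_fin.
  - by rewrite lee_fin.
apply: eq_integral => x _; rewrite muleCA; congr (_ * _).
rewrite -ge0_integralZl//; last 2 first.
  - by move=> t _; rewrite mule_ge0// lee_fin.
  - by rewrite lee_fin.
  by apply: eq_integral => t _; rewrite /= EFinM muleCA.
  apply: emeasurable_funM; first exact/measurable_EFinP.
  by apply/measurable_EFinP; apply: measurable_indic; exact: mI.
apply: mPsi_integrand => //; first by move=> t; rewrite lee_fin.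
by apply/measurable_EFinP; apply: measurable_indic; exact: mI.
Qed.

End Psi.
Arguments Psi {R d T d' S} mu K a b f.
Arguments Psi_mct {R d T d' S mu K} mK {a} a0 ma {b} b0 mb {f} f0 mf.
Arguments Psi_lin {R d T d' S mu K} mK {a} a0 ma {b} b0 mb g.
Arguments mPsi_inner {R d T d' S K} mK {b} b0 mb {f}.
Arguments mPsi_integrand {R d T d' S K} mK {a} ma {b} b0 mb {f}.

Lemma Psi_ext (R : realType) (d : measure_display) (T : measurableType d)
  (d' : measure_display) (S : measurableType d')
  (mu : {measure set T -> \bar R})
  (K1 K2 : T -> {measure set S -> \bar R})
  (mK1 : forall U, measurable U -> measurable_fun setT (fun x => K1 x U))
  (mK2 : forall U, measurable U -> measurable_fun setT (fun x => K2 x U))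
  (a1 a2 : T -> \bar R) (a10 : forall x, 0 <= a1 x) (a20 : forall x, 0 <= a2 x)
  (ma1 : measurable_fun setT a1) (ma2 : measurable_fun setT a2)
  (b1 b2 : S -> R) (b10 : forall t, (0 <= b1 t)%R) (b20 : forall t, (0 <= b2 t)%R)
  (mb1 : measurable_fun setT b1) (mb2 : measurable_fun setT b2) :
  (forall A, measurable A ->
    Psi mu K1 a1 b1 (EFin \o \1_A) = Psi mu K2 a2 b2 (EFin \o \1_A)) ->
  forall f, (forall t, 0 <= f t) -> measurable_fun setT f ->
    Psi mu K1 a1 b1 f = Psi mu K2 a2 b2 f.
Proof.
move=> H f f0 mf.
rewrite (Psi_mct mK1 a10 ma1 b10 mb1 f0 mf) (Psi_mct mK2 a20 ma2 b20 mb2 f0 mf).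
suff -> : (fun n => Psi mu K1 a1 b1 (EFin \o nnsfun_approx measurableT mf n)) =
  (fun n => Psi mu K2 a2 b2 (EFin \o nnsfun_approx measurableT mf n)) by [].
apply/funext => n.
rewrite (Psi_lin mK1 a10 ma1 b10 mb1) (Psi_lin mK2 a20 ma2 b20 mb2).
apply: eq_fsbigr => r _; rewrite H//.
Qed.


Lemma int_mkindic (R : realType) (d : measure_display) (T : measurableType d)
  (mu : {measure set T -> \bar R}) (A : set T) (f : T -> \bar R) :
  \int[mu]_(x in A) f x = \int[mu]_x (f x * (\1_A x)%:E).
Proof.
rewrite integral_mkcond; apply: eq_integral => x _.
by rewrite /patch indicE; case: ifP => _; rewrite ?mule1 ?mule0.
Qed.

Lemma density_int (R : realType) (d : measure_display) (T : measurableType d)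
  (mu : {measure set T -> \bar R}) (psi : T -> T) (hp : T -> \bar R) :
  measurable_fun setT psi -> measurable_fun setT hp -> (forall x, 0 <= hp x) ->
  (forall A, measurable A -> mu (psi @^-1` A) = \int[mu]_(x in A) hp x) ->
  forall f : T -> \bar R, (forall x, 0 <= f x) -> measurable_fun setT f ->
  \int[mu]_x f (psi x) = \int[mu]_x (f x * hp x).
Proof.
move=> mpsi mhp hp0 H f f0 mf.
have mK1 U : measurable U -> measurable_fun setT (fun x => (\d_(psi x) U : \bar R)).
  move=> mU; rewrite /=.
  have -> : (fun x => (\d_(psi x) U : \bar R)) = (fun y => (\d_y U : \bar R)) \o psi by [].
  by apply: measurableT_comp => //; exact: (@measurable_fun_dirac _ _ R setT U mU).
have mK2 (U : set T) : measurable U -> measurable_fun setT (fun x : T => (\d_x U : \bar R)).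
  by move=> mU; exact: (@measurable_fun_dirac _ T R setT U mU).
have E1 g : measurable_fun setT g ->
    \int[mu]_x g (psi x) = Psi mu (fun x => \d_(psi x)) (cst 1) (cst 1%R) g.
  move=> mg; rewrite /Psi; apply: eq_integral => x _.
  rewrite /= mul1e (_ : (fun t => 1%:E * g t) = g); last by apply/funext => t; rewrite mul1e.
  by rewrite integral_dirac// diracT mul1e.
have E2 g : measurable_fun setT g ->
    \int[mu]_x (g x * hp x) = Psi mu (fun x => \d_x) hp (cst 1%R) g.
  move=> mg; rewrite /Psi; apply: eq_integral => x _.
  rewrite /= (_ : (fun t => 1%:E * g t) = g); last by apply/funext => t; rewrite mul1e.
  by rewrite integral_dirac// diracT mul1e muleC.
rewrite E1// E2//; apply: Psi_ext => //.
move=> A mA.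
have mA1 : measurable_fun setT (EFin \o (\1_A : T -> R)).
  by apply/measurable_EFinP; exact: measurable_indic.
rewrite -E1// -E2//.
transitivity (\int[mu]_x (\1_(psi @^-1` A) x)%:E).
  by apply: eq_integral => x _; rewrite /= !indicE.
rewrite integral_indic// ?setIT; last first.
  by rewrite -(setTI (_ @^-1` _)); exact: mpsi.
rewrite H// int_mkindic; apply: eq_integral => x _; exact: muleC.
Qed.


Section uniq.
Context (R : realType) (d : measure_display) (T : measurableType d)
  (mu : {measure set T -> \bar R}).

Lemma measurable_le_cst (g : T -> \bar R) (c : \bar R) :
  measurable_fun setT g -> measurable [set x | g x <= c].
Proof.
move=> mg; rewrite -(setTI [set x | _]).
by apply: (measurable_lee measurableT mg); exact: measurable_cst.
Qed.

Lemma ae_eq_piece (f g : T -> \bar R) :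
  measurable_fun setT f -> measurable_fun setT g ->
  (forall x, 0 <= f x) -> (forall x, 0 <= g x) ->
  (forall A, measurable A -> \int[mu]_(x in A) f x = \int[mu]_(x in A) g x) ->
  forall (F : set T) (k : nat), measurable F -> mu F < +oo ->
  {ae mu, forall x, (F `&` [set x | g x <= k%:R%:E]) x -> f x = g x}.
Proof.
move=> mf mg f0 g0 H F k mF muF.
have mE : measurable (F `&` [set x | g x <= k%:R%:E]).
  by apply: measurableI => //; exact: measurable_le_cst.
have gi : mu.-integrable (F `&` [set x | g x <= k%:R%:E]) g.
  apply/integrableP; split; first exact: measurable_funS mg.
  apply: (@le_lt_trans _ _ (\int[mu]_(x in F `&` [set x | g x <= k%:R%:E]) (cst k%:R%:E) x)).
    apply: ge0_le_integral => //.
    - apply: measurableT_comp => //; exact: measurable_funS mg.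
    - by move=> x [_ /=]; rewrite gee0_abs.
  rewrite integral_cst// lte_mul_pinfty// ?lee_fin//.
  by rewrite (le_lt_trans _ muF)// le_measure// ?inE//; apply: subIsetl.
have := @integral_ae_eq _ _ _ mu _ mE f g gi (measurable_funS measurableT (@subsetT _ _) mf).
have H' : forall E, E `<=` F `&` [set x | g x <= k%:R%:E] -> measurable E ->
    \int[mu]_(x in E) g x = \int[mu]_(x in E) f x.
  by move=> E _ mE'; rewrite H.
move=> /(_ H'); apply: filterS => x + Ex; move=> /(_ Ex) ->//.
Qed.
Lemma fin_le_nat (x : \bar R) : x \is a fin_num -> exists k : nat, x <= k%:R%:E.
Proof.
move=> xf; exists (Num.truncn (fine x)).+1.
by rewrite -(fineK xf) lee_fin ltW// Num.Theory.truncnS_gt.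
Qed.

Lemma ae_eq_int (f g : T -> \bar R) :
  measurable_fun setT f -> measurable_fun setT g ->
  (forall x, 0 <= f x) -> (forall x, 0 <= g x) ->
  sigma_finite setT mu ->
  (forall A, measurable A -> \int[mu]_(x in A) f x = \int[mu]_(x in A) g x) ->
  {ae mu, forall x, f x = g x}.
Proof.
move=> mf mg f0 g0 [F FT HF] H.
have A1 : {ae mu, forall x, forall i k,
    (F i `&` [set x | g x <= k%:R%:E]) x -> f x = g x}.
  apply: ae_foralln => i; apply: ae_foralln => k.
  by apply: ae_eq_piece => //; [exact: (HF i).1|exact: (HF i).2].
have A2 : {ae mu, forall x, forall i k,
    (F i `&` [set x | f x <= k%:R%:E]) x -> g x = f x}.
  apply: ae_foralln => i; apply: ae_foralln => k.
  apply: ae_eq_piece => //; [|exact: (HF i).1|exact: (HF i).2].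
  by move=> A mA; rewrite H.
apply: filterS2 A1 A2 => x h1 h2.
have : setT x by [].
rewrite FT => -[i _ Fix].
have [ff|nff] := boolP (f x \is a fin_num).
  by have [k fk] := fin_le_nat _ ff; rewrite (h2 i k).
have [gf|ngf] := boolP (g x \is a fin_num).
  by have [k gk] := fin_le_nat _ gf; rewrite (h1 i k).
move: nff ngf (f0 x) (g0 x); case: (f x) => [r| |]; case: (g x) => [s| |] //.
Qed.

End uniq.


Section main.
Context (R : realType) (d : measure_display) (T : measurableType d)
    (mu : {measure set T -> \bar R}) (phi : T -> T)
    (P : R.-pker T ~> R) (h : nat -> T -> \bar R).
Hypothesis sfin : sigma_finite setT mu.
Hypothesis nsing : nonsingular mu phi.
Hypothesis RN : forall n, RN_deriv_iter mu phi n (h n).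
Hypothesis h1pos : {ae mu, forall x, 0 < h 1%N x < +oo}.
Hypothesis Pneg : forall x, P x `]-oo, 0%R[%classic = 0.
Hypothesis CC : forall sigma : set R, measurable sigma -> sigma `<=` `[0%R, +oo[%classic ->
     exists e, is_condexp mu phi (fun x => P x sigma) e /\
       {ae mu, forall x, e x =
          ediv0 (\int[P (phi x)]_(t in sigma) t%:E) (h 1%N (phi x))}.

Let Dset : set R := `[0%R, +oo[%classic.
Let mDset : measurable Dset. Proof. exact: measurable_itv. Qed.

Let mphi : measurable_fun setT phi. Proof. exact: nsing.1. Qed.

Lemma miter n : measurable_fun setT (iter n phi).
Proof.
elim: n => [|n IH]; first exact: measurable_id.
exact: (measurableT_comp mphi IH).
Qed.

Let mh n : measurable_fun setT (h n). Proof. exact: (RN n).1. Qed.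
Let h0 n x : 0 <= h n x. Proof. exact: (RN n).2.1. Qed.
Let hRN n A : measurable A -> mu (iter n phi @^-1` A) = \int[mu]_(x in A) h n x.
Proof. exact: (RN n).2.2. Qed.

Lemma ae_comp (Q : T -> Prop) :
  {ae mu, forall x, Q x} -> {ae mu, forall x, Q (phi x)}.
Proof.
case=> N [mN muN QN]; exists (phi @^-1` N); split.
- by rewrite -(setTI (_ @^-1` _)); exact: mphi.
- exact: nsing.2.
- by move=> x /= nQ; apply: QN.
Qed.

Lemma PD x : P x Dset = 1.
Proof.
have := @prob_kernel _ _ _ _ _ P x.
rewrite -(setUv Dset) measureU//; last 2 first.
  - exact: measurableC.
  - by rewrite setICr.
rewrite /Dset setCitvr; have := Pneg x; set a := P x _; set b := P x _ => Hb; rewrite -[X in X -> _]/(b + a = 1)%E Hb adde0.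
by [].
Qed.

Definition mom n x := \int[P x]_(t in Dset) ((t ^+ n)%R)%:E.

Let fpow n : R -> \bar R := fun t => ((`|t| ^+ n)%R)%:E.
Let fpow0 n t : 0 <= fpow n t. Proof. by rewrite lee_fin. Qed.
Let mfpow n : measurable_fun setT (fpow n).
Proof.
apply/measurable_EFinP; apply: measurable_funX; exact: normr_measurable.
Qed.

Let mK : forall U, measurable U -> measurable_fun setT (fun x => P x U).
Proof. exact: measurable_kernel. Qed.

Let mKphi : forall U, measurable U -> measurable_fun setT (fun x => P (phi x) U).
Proof. by move=> U mU; have H := measurableT_comp (mK U mU) mphi; exact: H. Qed.

Let b1 : R -> R := fun t => \1_Dset t.
Let b2 : R -> R := fun t => (t * \1_Dset t)%R.
Let b10 t : (0 <= b1 t)%R. Proof. by rewrite /b1 indicE. Qed.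
Let b20 t : (0 <= b2 t)%R.
Proof.
rewrite /b2 indicE; have [tD|tD] := boolP (t \in Dset); rewrite /=; last by rewrite mulr0.
have t0 : (0 <= t)%R by move: tD; rewrite inE /Dset /= in_itv /= andbT.
by rewrite mulr1.
Qed.
Let mb1 : measurable_fun setT b1. Proof. exact: measurable_indic. Qed.
Let mb2 : measurable_fun setT b2.
Proof. by apply: measurable_funM => //; exact: measurable_indic. Qed.

Lemma mom_inner n x : mom n x = \int[P x]_t ((b1 t)%:E * fpow n t).
Proof.
rewrite /mom int_mkindic; apply: eq_integral => t _.
rewrite /b1 /fpow indicE; have [tD|tD] := boolP (t \in Dset); rewrite /=; last by rewrite mule0 mul0e.
have t0 : (0 <= t)%R by move: tD; rewrite inE /Dset /= in_itv /= andbT.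
rewrite mule1 mul1e ger0_norm//.
Qed.

Lemma mom_innerS n y : mom n.+1 y = \int[P y]_t ((b2 t)%:E * fpow n t).
Proof.
rewrite /mom int_mkindic; apply: eq_integral => t _.
rewrite /b2 /fpow indicE; have [tD|tD] := boolP (t \in Dset); rewrite /=; last by rewrite mulr0 mule0 mul0e.
have t0 : (0 <= t)%R by move: tD; rewrite inE /Dset /= in_itv /= andbT.
rewrite mule1 mulr1 ger0_norm// -EFinM exprS. by [].
Qed.


Lemma mmom n : measurable_fun setT (mom n).
Proof.
have -> : mom n = fun x => \int[P x]_t ((b1 t)%:E * fpow n t).
  by apply/funext => x; exact: mom_inner.
exact: (mPsi_inner mK b10 mb1 (fpow0 n) (mfpow n)).
Qed.

Lemma mom_ge0 n x : 0 <= mom n x.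
Proof. by rewrite mom_inner; apply: integral_ge0 => t _; rewrite mule_ge0// lee_fin. Qed.

Lemma mom0 x : mom 0 x = 1.
Proof.
rewrite /mom (_ : (fun t : R => ((t ^+ 0)%R)%:E) = cst 1); last by apply/funext=> t; rewrite expr0.
by rewrite integral_cst// PD mul1e.
Qed.

Lemma base : {ae mu, forall x, h 0 x = mom 0 x}.
Proof.
have : {ae mu, forall x, h 0 x = cst 1 x}.
  apply: ae_eq_int => //.
  all: try (move=> x; exact: lee01).
  all: try exact: measurable_cst.
  move=> A mA; rewrite -hRN// integral_cst// mul1e.
  by [].
by apply: filterS => x ->; rewrite mom0.
Qed.

Lemma condexp_meas (f e : T -> \bar R) : is_condexp mu phi f e ->
  measurable_fun setT e.
Proof.
move=> [epm _] _ B mB; have [D' [mD' ->]] := epm B mB.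
by rewrite setTI -(setTI (_ @^-1` _)); exact: mphi.
Qed.

Let gA (A : set T) : T -> \bar R := fun y => (\1_A y)%:E * h 1%N y.
Let mgA A : measurable A -> measurable_fun setT (gA A).
Proof.
move=> mA; apply: emeasurable_funM => //.
by apply/measurable_EFinP; exact: measurable_indic.
Qed.
Let gA0 A y : 0 <= gA A y.
Proof. by rewrite /gA mule_ge0// lee_fin. Qed.

Let a1 (A : set T) : T -> \bar R := fun x => gA A (phi x).
Let a2 (A : set T) : T -> \bar R := fun x => (\1_A (phi x))%:E.
Let ma1 A : measurable A -> measurable_fun setT (a1 A).
Proof. by move=> mA; exact: (measurableT_comp (mgA A mA) mphi). Qed.
Let ma2 A : measurable A -> measurable_fun setT (a2 A).
Proof.
move=> mA; apply/measurable_EFinP.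
have H := measurableT_comp (@measurable_indic _ T R setT A mA) mphi; exact: H.
Qed.
Let a10 A x : 0 <= a1 A x. Proof. exact: gA0. Qed.
Let a20 A x : 0 <= a2 A x. Proof. by rewrite /a2 lee_fin. Qed.

Lemma CCind (A : set T) (mA : measurable A) (sigma : set R) (ms : measurable sigma) :
  Psi mu P (a1 A) b1 (EFin \o \1_sigma) =
  Psi mu (fun x => P (phi x)) (a2 A) b2 (EFin \o \1_sigma).
Proof.
set s' := sigma `&` Dset.
have ms' : measurable s' by exact: measurableI.
have [e [ece eae]] := CC _ ms' (@subIsetr _ _ _).
have me := condexp_meas _ _ ece.
have [_ [e0 eeq]] := ece.
have inner1 x : \int[P x]_t ((b1 t)%:E * (EFin \o \1_sigma) t) = P x s'.
  transitivity (\int[P x]_t (\1_s' t)%:E).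
    apply: eq_integral => t _; rewrite /b1 /s' indicI /= -EFinM.
    by rewrite mulrC.
  by rewrite integral_indic// setIT.
have inner2 y : \int[P y]_(t in s') t%:E =
    \int[P y]_t ((b2 t)%:E * (EFin \o \1_sigma) t).
  rewrite int_mkindic; apply: eq_integral => t _.
  by rewrite /s' /b2 indicI /= -!EFinM (mulrC (\1_sigma t)) mulrA.
rewrite /Psi.
transitivity (\int[mu]_x (gA A (phi x) * P x s')).
  by apply: eq_integral => x _; rewrite inner1.
rewrite (eeq (gA A) (mgA A mA) (gA0 A)).
apply: ae_eq_integral => //.
- by apply: emeasurable_funM => //; exact: (measurableT_comp (mgA A mA) mphi).
- apply: (mPsi_integrand mKphi (ma2 A mA) b20 mb2) => //.
  by move=> t; rewrite lee_fin.
  by apply/measurable_EFinP; exact: measurable_indic.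
rewrite /ae_eq; apply: filterS2 eae (ae_comp _ h1pos) => x -> /andP[hp hf] _.
rewrite -inner2 /ediv0 (gt_eqF hp) /gA /a2.
move: hp hf; case: (h 1%N (phi x)) => // r r0 _.
move: r0; rewrite lte_fin => r0; rewrite inver (gt_eqF r0) -muleA; congr (_ * _).
by rewrite muleCA -EFinM mulfV ?gt_eqF// mule1.
Qed.

Lemma step n : {ae mu, forall x, h n x = mom n x} ->
  {ae mu, forall x, h n.+1 x = mom n.+1 x}.
Proof.
move=> IH.
have mgAphi A : measurable A -> measurable_fun setT (gA A \o phi).
  by move=> mA; have H := measurableT_comp (mgA A mA) mphi; exact: H.
have key A : measurable A ->
  \int[mu]_(x in A) (h 1%N x * h n.+1 x) =
  \int[mu]_(x in A) (h 1%N x * mom n.+1 x).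
  move=> mA; rewrite (@int_mkindic _ _ _ mu A) (@int_mkindic _ _ _ mu A).
  transitivity (\int[mu]_y (gA A y * h n.+1 y)).
    by apply: eq_integral => y _; rewrite /gA muleC muleA.
  rewrite -(@density_int _ _ _ mu _ _ (miter n.+1) (mh n.+1) (h0 n.+1) (hRN n.+1) _ (gA0 A) (mgA A mA)).
  rewrite (_ : (fun x => gA A (iter n.+1 phi x)) =
               (fun x => (gA A \o phi) (iter n phi x))) //.
  rewrite (@density_int _ _ _ mu _ _ (miter n) (mh n) (h0 n) (hRN n)); last 2 first.
  - by move=> x; exact: gA0.
  - exact: mgAphi.
  transitivity (\int[mu]_x ((gA A \o phi) x * mom n x)).
    apply: ae_eq_integral => //.
    - by apply: emeasurable_funM => //; exact: mgAphi.
    - by apply: emeasurable_funM => //; [exact: mgAphi|exact: mmom].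
    - by rewrite /ae_eq; apply: filterS IH => x -> _.
  transitivity (Psi mu P (a1 A) b1 (fpow n)).
    by rewrite /Psi; apply: eq_integral => x _; rewrite mom_inner.
  rewrite (@Psi_ext _ _ _ _ _ mu P (fun x => P (phi x)) mK mKphi (a1 A) (a2 A)
    (a10 A) (a20 A) (ma1 A mA) (ma2 A mA) b1 b2 b10 b20 mb1 mb2 (CCind A mA) _
    (fpow0 n) (mfpow n)).
  transitivity (\int[mu]_x ((fun y => (\1_A y)%:E * mom n.+1 y) (phi x))).
    by rewrite /Psi; apply: eq_integral => x _; rewrite mom_innerS.
  rewrite (@density_int _ _ _ mu _ _ mphi (mh 1%N) (h0 1%N) (hRN 1%N) (fun y => (\1_A y)%:E * mom n.+1 y)); last 2 first.
  - by move=> y; rewrite mule_ge0// ?lee_fin//; exact: mom_ge0.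
  - apply: emeasurable_funM; last exact: mmom.
    by apply/measurable_EFinP; exact: measurable_indic.
  by apply: eq_integral => y _; rewrite [LHS]muleC [RHS]muleC muleCA.
have := @ae_eq_int _ _ _ mu (fun x => h 1%N x * h n.+1 x)
  (fun x => h 1%N x * mom n.+1 x).
move=> /(_ _ _ _ _ sfin key) H.
have {H} : {ae mu, forall x, h 1%N x * h n.+1 x = h 1%N x * mom n.+1 x}.
  apply: H.
  - exact: emeasurable_funM.
  - by apply: emeasurable_funM => //; exact: mmom.
  - by move=> x; rewrite mule_ge0.
  - by move=> x; rewrite mule_ge0// mom_ge0.
apply: filterS2 h1pos => x /andP[hp hf].
move: hp hf; case: (h 1%N x) => // r r0 _ E.
move: r0; rewrite lte_fin => r0.
have := congr1 (fun z => (r^-1)%:E * z) E.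
by rewrite !muleA -EFinM mulVf ?gt_eqF// !mul1e.
Qed.

End main.


Section fin.
Context (R : realType) (d : measure_display) (T : measurableType d)
    (mu : {measure set T -> \bar R}) (phi : T -> T) (h : nat -> T -> \bar R).
Hypothesis sfin : sigma_finite setT mu.
Hypothesis nsing : nonsingular mu phi.
Hypothesis RN : forall n, RN_deriv_iter mu phi n (h n).

Let mphi : measurable_fun setT phi. Proof. exact: nsing.1. Qed.
Let miter5 n : measurable_fun setT (iter n phi).
Proof.
elim: n => [|n IH]; first exact: measurable_id.
exact: (measurableT_comp mphi IH).
Qed.
Let mh n : measurable_fun setT (h n). Proof. exact: (RN n).1. Qed.
Let h0 n x : 0 <= h n x. Proof. exact: (RN n).2.1. Qed.
Let hRN n A : measurable A -> mu (iter n phi @^-1` A) = \int[mu]_(x in A) h n x.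
Proof. exact: (RN n).2.2. Qed.

Lemma fin_piece n (C : set T) : measurable C -> mu C < +oo ->
  (forall x, C x -> h n x = +oo) -> Cphi_pow_densely_defined mu phi n ->
  mu C = 0.
Proof.
move=> mC muC Cinf Hd.
apply/eqP; apply/negPn/negP => muC0.
set c := fine (mu C).
have c0 : (0 < c)%R by apply: fine_gt0; rewrite muC andbT lt0e muC0 measure_ge0.
have L2f : L2 mu (\1_C : T -> R).
  split; first exact: measurable_indic.
  rewrite (_ : (fun x => ((`|\1_C x| ^+ 2)%R)%:E) = fun x => (\1_C x)%:E).
    by rewrite integral_indic// setIT.
  apply/funext => x; rewrite indicE; case: (x \in C) => /=.
  - by rewrite normr1 expr1n.
  - by rewrite normr0 expr0n.
have [g [gdom gclose]] := Hd _ L2f c c0.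
have mg : measurable_fun setT g := (gdom 0%N (leq0n n)).1.
have gfin := (gdom n (leqnn n)).2.
set G : T -> \bar R := fun y => ((`|g y| ^+ 2)%R)%:E.
have mG : measurable_fun setT G.
  by apply/measurable_EFinP; apply: measurable_funX; exact: measurableT_comp.
have G0 y : 0 <= G y by rewrite lee_fin.
have E := @density_int _ _ _ mu _ _ (miter5 n) (mh n) (h0 n) (hRN n) G G0 mG.
have I0 : \int[mu]_(x in C) G x = 0.
  have le1 : \int[mu]_(x in C) (G x * h n x) <= \int[mu]_x (G x * h n x).
    apply: ge0_subset_integral => //.
    - exact: emeasurable_funM.
    - by move=> x _; rewrite mule_ge0.
  have eqC : \int[mu]_(x in C) (G x * h n x) = \int[mu]_(x in C) G x * +oo.
    rewrite -ge0_integralZr//; last exact: measurable_funS mG.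
    by apply: eq_integral => x; rewrite inE => Cx; rewrite Cinf.
  have lt : \int[mu]_(x in C) G x * +oo < +oo.
    by rewrite -eqC (le_lt_trans le1)// -E.
  apply/eqP; rewrite eq_le integral_ge0 ?andbT// leNgt; apply/negP => pos.
  by rewrite gt0_muley// ltxx in lt.
have aeg : ae_eq mu C G (cst 0).
  apply/(ae_eq_integral_abs mu mC).
  - exact: measurable_funS mG.
  - by rewrite -[RHS]I0; apply: eq_integral => x _; rewrite gee0_abs.
have mF : measurable_fun setT (fun x => ((`|\1_C x - g x| ^+ 2)%R)%:E : \bar R).
  apply/measurable_EFinP; apply: measurable_funX; apply: measurableT_comp => //.
  by apply: measurable_funB => //; exact: measurable_indic.
have ge1 : \int[mu]_(x in C) ((`|\1_C x - g x| ^+ 2)%R)%:E <=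
    \int[mu]_x ((`|\1_C x - g x| ^+ 2)%R)%:E.
  apply: ge0_subset_integral => //.
have eqC' : \int[mu]_(x in C) ((`|\1_C x - g x| ^+ 2)%R)%:E = c%:E.
  rewrite (@ae_eq_integral _ _ _ mu C (cst 1) _) //.
  - by rewrite integral_cst// mul1e /c fineK// ge0_fin_numE.
  - exact: measurable_funS mF.
  move: aeg; rewrite /ae_eq; apply: filterS => x H Cx; move: (H Cx); rewrite /G /= => /eqP.
  rewrite eqe expf_eq0 /= normr_eq0 => /eqP ->.
  by rewrite indicE mem_set// subr0 normr1 expr1n.
have ge : c%:E <= \int[mu]_x ((`|\1_C x - g x| ^+ 2)%R)%:E by rewrite -eqC'.
by have := lt_le_trans gclose ge; rewrite ltxx.
Qed.

Lemma fin_ae n : Cphi_pow_densely_defined mu phi n ->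
  {ae mu, forall x, h n x < +oo}.
Proof.
move=> Hd; have [F FT HF] := sfin.
have A : {ae mu, forall x, forall i, F i x -> h n x < +oo}.
  apply: ae_foralln => i.
  have mC : measurable (F i `&` [set x | h n x = cst +oo x]).
    apply: measurable_eqe; first exact: (HF i).1.
    - exact: measurable_funS (mh n).
    - exact: measurable_cst.
  exists (F i `&` [set x | h n x = cst +oo x]); split => //.
  - apply: (@fin_piece n _ mC) => //.
    + by apply: (le_lt_trans _ (HF i).2); apply: le_measure; rewrite ?inE //; exact: (HF i).1.
    + by move=> x [].
  - move=> x /= /not_implyP [Fix nh]; split => //.
    move: nh (h0 n x); case: (h n x) => //= r; rewrite ltry //.
apply: filterS A => x Hx.
have : setT x by [].
by rewrite FT => -[i _ Fix]; exact: Hx i Fix.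
Qed.

End fin.


Theorem theorem17 (R : realType) (d : measure_display) (T : measurableType d)
    (mu : {measure set T -> \bar R}) (phi : T -> T)
    (P : R.-pker T ~> R) (h : nat -> T -> \bar R) :
  sigma_finite setT mu ->
  nonsingular mu phi ->
  (forall n, RN_deriv_iter mu phi n (h n)) ->
  {ae mu, forall x, 0 < h 1%N x < +oo} ->
  (forall x, P x `]-oo, 0%R[%classic = 0) ->
  (forall sigma : set R, measurable sigma -> sigma `<=` `[0%R, +oo[%classic ->
     exists e, is_condexp mu phi (fun x => P x sigma) e /\
       {ae mu, forall x, e x =
          ediv0 (\int[P (phi x)]_(t in sigma) t%:E) (h 1%N (phi x))}) ->
  (forall n : nat, {ae mu, forall x,
      h n x = \int[P x]_(t in `[0%R, +oo[%classic) ((t ^+ n)%R)%:E}) /\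
  ((forall n : nat, Cphi_pow_densely_defined mu phi n) ->
     {ae mu, forall x, Stieltjes_rep (fun n => h n x) (P x)}).
Proof.
move=> sfin nsing RN h1pos Pneg CC.
have part1 n : {ae mu, forall x, h n x = mom R d T P n x}.
  elim: n => [|n IH]; first by apply: (@base R d T mu phi P h).
  by apply: (@step R d T mu phi P h).
split; first exact: part1.
move=> Hd.
have A1 := ae_foralln part1.
have A2 := ae_foralln (fun n => @fin_ae R d T mu phi h sfin nsing RN n (Hd n)).
apply: filterS2 A1 A2 => x E1 E2; split => n.
- by rewrite ge0_fin_numE ?E2// ; exact: (RN n).2.1.
- exact: E1.
Qed.
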